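(* Let $\mathcal F=\{f_1,\dots,f_M\}$ be a frame for $\mathbb R^N$ with range of coefficients $W\subset\mathbb R^M$. Then $\mathbb M^{\mathcal F}$ is injective if and only if for every subset $S\subset\{1,\dots,M\}$: whenever $W\cap L^S\neq\{0\}$, one has $W\cap L^{S^\complement}=\{0\}$.
   Context: A frame for $\mathbb R^N$ is a spanning family $\{f_1,\dots,f_M\}$; $W=\{(\langle x,f_k\rangle)_{k=1}^M: x\in\mathbb R^N\}$. For $S\subset\{1,\dots,M\}$, $L^S=\{(a_1,\dots,a_M)\in\mathbb R^M: a_i=0 \text{ for all } i\in S\}$, and $S^\complement$ is the complement of $S$. $\mathbb M^{\mathcal F}:\mathbb R^N/\{\pm1\}\to\mathbb R^M$, $\hat x\mapsto(|\langle x,f_k\rangle|)_k$; injectivity means $|\langle x,f_k\rangle|=|\langle y,f_k\rangle|$ for all $k$ implies $y=\pm x$. *)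

(* Defs.v *)
From HB Require Import structures.
From mathcomp Require Import all_boot all_order all_algebra.
From mathcomp Require Import reals.
Set Implicit Arguments. Unset Strict Implicit. Unset Printing Implicit Defensive.
Import Order.TTheory GRing.Theory Num.Theory.
Local Open Scope ring_scope.

(* A family f_1..f_M in R^N is encoded by the M x N matrix F whose k-th row is f_k.
   Vectors of R^N are row vectors 'rV[R]_N. *)

Definition inner (R : realType) (N : nat) (x y : 'rV[R]_N) : R :=
  \sum_(i < N) x 0 i * y 0 i.

(* The family is a frame: it spans R^N, i.e. the row space of F is all of R^N. *)
Definition is_frame (R : realType) (M N : nat) (F : 'M[R]_(M, N)) : Prop :=
  row_full F.

Definition coeffs (R : realType) (M N : nat) (F : 'M[R]_(M, N)) (x : 'rV[R]_N)
  : 'rV[R]_M := \row_(k < M) inner x (row k F).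

Definition inW (R : realType) (M N : nat) (F : 'M[R]_(M, N)) (a : 'rV[R]_M) : Prop :=
  exists x : 'rV[R]_N, a = coeffs F x.

Definition inL (R : realType) (M : nat) (S : {set 'I_M}) (a : 'rV[R]_M) : Prop :=
  forall i, i \in S -> a 0 i = 0.

Definition WL_nontrivial (R : realType) (M N : nat) (F : 'M[R]_(M, N))
  (S : {set 'I_M}) : Prop :=
  exists a : 'rV[R]_M, [/\ inW F a, inL S a & a != 0].

(* injectivity of the phaseless map x mod ±1 |-> (|<x,f_k>|)_k *)
Definition phase_retrievable (R : realType) (M N : nat) (F : 'M[R]_(M, N)) : Prop :=
  forall x y : 'rV[R]_N,
    (forall k : 'I_M, `|inner x (row k F)| = `|inner y (row k F)|) ->
    y = x \/ y = - x.

(* Main.v *)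
Require Import Defs.
From HB Require Import structures.
From mathcomp Require Import all_boot all_order all_algebra.
From mathcomp Require Import reals.
Import GRing.Theory Num.Theory.
Local Open Scope ring_scope.

Lemma coeffsE (R : realType) (M N : nat) (F : 'M[R]_(M, N)) x :
  coeffs F x = x *m F^T.
Proof.
apply/rowP=> k; rewrite !mxE /inner; apply: eq_bigr => i _.
by rewrite !mxE.
Qed.

Lemma coeffs_inj0 (R : realType) (M N : nat) (F : 'M[R]_(M, N)) x :
  row_full F -> coeffs F x = 0 -> x = 0.
Proof.
move=> hF; rewrite coeffsE => h.
have h2 : F *m x^T = 0 by rewrite -[F]trmxK -trmx_mul h trmx0.
have : pinvmx F *m F *m x^T = 0 by rewrite -mulmxA h2 mulmx0.
rewrite mulVpmx // mul1mx => /(congr1 trmx); rewrite trmxK trmx0 => ->.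
done.
Qed.

Lemma innerD (R : realType) (N : nat) (x y z : 'rV[R]_N) :
  inner (x + y) z = inner x z + inner y z.
Proof. by rewrite /inner -big_split; apply: eq_bigr => i _; rewrite !mxE mulrDl. Qed.

Lemma innerB (R : realType) (N : nat) (x y z : 'rV[R]_N) :
  inner (x - y) z = inner x z - inner y z.
Proof. by rewrite /inner -sumrB; apply: eq_bigr => i _; rewrite !mxE mulrBl. Qed.

Lemma dbl0 (R : realType) (N : nat) (v : 'rV[R]_N) : v + v = 0 -> v = 0.
Proof.
move=> e; have : (2%:R : R) *: v = 0 by rewrite scaler_nat mulr2n.
by move/eqP; rewrite scaler_eq0 pnatr_eq0 /= => /eqP.
Qed.

Theorem corollary2p4 (R : realType) (M N : nat) (F : 'M[R]_(M, N)) :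
  is_frame F ->
  (phase_retrievable F <->
   (forall S : {set 'I_M}, WL_nontrivial F S -> ~ WL_nontrivial F (~: S))).
Proof.
move=> hF; split.
- move=> hPR S [a [[u ->] ha anz]] [b [[v ->] hb bnz]].
  have hc : forall k : 'I_M, `|inner (u + v) (row k F)| = `|inner (u - v) (row k F)|.
    move=> k.
    rewrite innerD innerB.
    case: (boolP (k \in S)) => kS.
      by move: (ha k kS); rewrite mxE => ->; rewrite !add0r normrN.
    by move: (hb k); rewrite mxE inE kS => ->; rewrite // subr0 addr0.
  case: (hPR _ _ hc) => h.
  + move: bnz; rewrite coeffsE.
    have -> : v = 0.
      have : (v + v) = 0.
        have : (u + v) - (u - v) = 0 by rewrite h subrr.
        by rewrite opprB addrC addrA subrK.
      exact: dbl0.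
    by rewrite mul0mx eqxx.
  + move: anz; rewrite coeffsE.
    have -> : u = 0.
      have e : u + u = 0.
        have : u - v + (u + v) = 0 by rewrite h addNr.
        by rewrite addrCA subrK.
      exact: dbl0.
    by rewrite mul0mx eqxx.
- move=> hC x y hxy.
  pose a := coeffs F (x - y); pose b := coeffs F (x + y).
  pose S := [set k | a 0 k == 0].
  have haS : inL S a by move=> k; rewrite inE => /eqP.
  have hbS : inL (~: S) b.
    move=> k; rewrite !inE /a /b !mxE innerB innerD => hne.
    idtac.
    move: (hxy k) => /eqP; rewrite eqr_norm2 => /orP [] /eqP e.
      by move: hne; rewrite e subrr eqxx.
    by rewrite e addNr.
  case: (boolP (a == 0)) => [/eqP a0 | anz].
    left; apply/eqP; rewrite eq_sym -subr_eq0; apply/eqP.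
    exact: coeffs_inj0 hF a0.
  case: (boolP (b == 0)) => [/eqP b0 | bnz].
    right; apply/eqP; rewrite -addr_eq0 addrC; apply/eqP.
    exact: coeffs_inj0 hF b0.
  exfalso; apply: (hC S).
    by exists a; split => //; exists (x - y).
  by exists b; split => //; exists (x + y).
Qed.
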